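(* Let $0<p<1-1/e^2$ be constant, $b=\frac1{1-p}$, and $\gamma(n)=2\log_b n-2\log_b\log_b n-2\log_b 2$. Let $k=k(n)$ be positive integers with $\frac nk-\gamma(n)=O(1)$. Then, as $n\to\infty$, \[\frac{\mu_{n,k+1}}{\mu_{n,k}}\ge(1+o(1))\, b^{\frac{n^2}{2k(k+1)}-\frac{n}{2k}}.\]
   Context: For $n\in\mathbb{N}$ let $m(n)=\lfloor p\binom n2\rfloor$ and $G\sim\mathcal{G}(n,m(n))$, the uniform random graph on $n$ labelled vertices with exactly $m(n)$ edges. An ordered $k$-equipartition of $[n]$ is an ordered partition into $k$ parts each of size $\lceil n/k\rceil$ or $\lfloor n/k\rfloor$, the larger parts listed first. Let $X_{n,k}$ be the number of ordered $k$-equipartitions all of whose parts are independent in $G$, and $\mu_{n,k}=\mathbb{E}[X_{n,k}]$. *)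

(* Defs.v *)
From HB Require Import structures.
From mathcomp Require Import all_boot all_order all_algebra.
From mathcomp Require Import reals.
From mathcomp Require Import sequences exp.
Set Implicit Arguments. Unset Strict Implicit. Unset Printing Implicit Defensive.
Import Order.TTheory GRing.Theory Num.Theory.
Local Open Scope ring_scope.

Definition is_graph (n : nat) (E : {set {set 'I_n}}) : bool :=
  [forall e in E, #|e| == 2%N].

(* All graphs on [n] with exactly m edges: the support of G(n,m). *)
Definition graphs_nm (n m : nat) : {set {set {set 'I_n}}} :=
  [set E : {set {set 'I_n}} | is_graph E && (#|E| == m)].

(* m(n) = floor(p * C(n,2)) (p * C(n,2) >= 0, so truncation = floor) *)
Definition m_of (R : realType) (p : R) (n : nat) : nat :=
  Num.truncn (p * ('C(n, 2))%:R).

(* An ordered k-equipartition of [n], encoded by the map f sending a vertex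
   to the index of its part: part j (0-based) has size n %/ k + [j < n %% k],
   i.e. the ceil(n/k)-sized parts come first. *)
Definition equipart (n k : nat) (f : {ffun 'I_n -> 'I_k}) : bool :=
  [forall j : 'I_k, #|[set x | f x == j]| == (n %/ k + (j < n %% k))%N].

Definition parts_indep (n k : nat) (E : {set {set 'I_n}}) (f : {ffun 'I_n -> 'I_k}) : bool :=
  [forall x : 'I_n, forall y : 'I_n, ([set x; y] \in E) ==> (f x != f y)].

Definition Xnk (n k : nat) (E : {set {set 'I_n}}) : nat :=
  #|[set f : {ffun 'I_n -> 'I_k} | equipart f && parts_indep E f]|.

(* mu_{n,k} = E[X_{n,k}] for G ~ G(n, m(n)) uniform *)
Definition mu (R : realType) (p : R) (n k : nat) : R :=
  (\sum_(E in graphs_nm n (m_of p n)) (Xnk k E)%:R) / (#|graphs_nm n (m_of p n)|)%:R.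

Definition bb (R : realType) (p : R) : R := (1 - p)^-1.
Definition logb (R : realType) (p : R) (x : R) : R := ln x / ln (bb p).

Definition gamma_n (R : realType) (p : R) (n : nat) : R :=
  2 * logb p n%:R - 2 * logb p (logb p n%:R) - 2 * logb p 2.

(* Main.v *)
Require Import Defs.
From HB Require Import structures.
From mathcomp Require Import all_boot all_order all_algebra.
From mathcomp Require Import reals.
From mathcomp Require Import sequences exp.
From mathcomp Require Import zify ring lra.
Set Implicit Arguments. Unset Strict Implicit. Unset Printing Implicit Defensive.
Import Order.TTheory GRing.Theory Num.Theory.
Section Multi.
Definition cnt (n k : nat) (s : 'I_k -> nat) : nat :=
  #|[set f : {ffun 'I_n -> 'I_k} | [forall j : 'I_k, #|[set x | f x == j]| == s j]]|.

Definition ext (n k : nat) (g : {ffun 'I_n -> 'I_k}) (j : 'I_k) : {ffun 'I_n.+1 -> 'I_k} :=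
  [ffun x => if unlift ord_max x is Some y then g y else j].

Lemma ext_widen n k (g : {ffun 'I_n -> 'I_k}) j y : ext g j (widen_ord (leqnSn n) y) = g y.
Proof.
rewrite /ext ffunE.
have -> : widen_ord (leqnSn n) y = lift ord_max y by apply: val_inj; rewrite /= /bump leqNgt ltn_ord add0n.
by rewrite liftK.
Qed.

Lemma ext_max n k (g : {ffun 'I_n -> 'I_k}) j : ext g j ord_max = j.
Proof. by rewrite /ext ffunE unlift_none. Qed.

Lemma card_setE n (P : pred 'I_n) : #|[set x | P x]| = (\sum_(x < n) P x)%N.
Proof. by rewrite -sum1_card big_mkcond /=; apply: eq_bigr => i _; rewrite inE; case: (P i). Qed.

Lemma card_fib_ext n k (g : {ffun 'I_n -> 'I_k}) j i :
  #|[set x | ext g j x == i]| = (#|[set y | g y == i]| + (j == i))%N.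
Proof.
rewrite !card_setE big_ord_recr /= ext_max; congr (_ + _)%N.
by apply: eq_bigr => y _; rewrite ext_widen.
Qed.

Lemma ext_inj n k j : injective (fun g : {ffun 'I_n -> 'I_k} => ext g j).
Proof.
move=> g1 g2 /= h; apply/ffunP => y.
by rewrite -(ext_widen g1 j) -(ext_widen g2 j) h.
Qed.

Definition dec k (s : 'I_k -> nat) (j : 'I_k) := fun i => (s i - (i == j))%N.

Lemma cnt_slice n k (s : 'I_k -> nat) j :
  #|[set f in [set f : {ffun 'I_n.+1 -> 'I_k} | [forall j : 'I_k, #|[set x | f x == j]| == s j]]
       | f ord_max == j]| = if (0 < s j)%N then cnt n (dec s j) else 0%N.
Proof.
case: ifP => hsj.
  rewrite /cnt -(card_imset _ (@ext_inj n k j)); apply: eq_card => f; rewrite !inE; apply/idP/idP.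
    case/andP => /forallP hf /eqP hfj.
    set g := [ffun y => f (widen_ord (leqnSn n) y)].
    have hfg : f = ext g j.
      apply/ffunP => x; rewrite /ext !ffunE.
      case: unliftP => [y ->|->]; last by rewrite hfj.
      rewrite ffunE; congr (f _); apply: val_inj; by rewrite /= /bump leqNgt ltn_ord add0n.
    apply/imsetP; exists g => //.
    rewrite inE; apply/forallP => i.
    move: (hf i); rewrite hfg card_fib_ext => /eqP hh.
    by rewrite /dec -hh [i == j]eq_sym addnK.
  case/imsetP => g; rewrite inE => /forallP hg ->.
  rewrite ext_max eqxx andbT; apply/forallP => i.
  rewrite card_fib_ext; move: (hg i); rewrite /dec => /eqP ->.
  case: (eqVneq i j) => [->|hij]; first by rewrite subn1 addn1 prednK.
  by rewrite subn0 addn0.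
apply/eqP; rewrite cards_eq0; apply/eqP/setP => f; rewrite !inE.
apply/negbTE; apply/negP => /andP [/forallP hf /eqP hfj].
move: (hf j) => /eqP hc; move: hsj; rewrite -hc.
suff : ord_max \in [set x | f x == j] by move=> h; suff -> : (0 < #|[set x | f x == j]|)%N by []; apply/card_gt0P; exists ord_max.
by rewrite inE hfj.
Qed.

Lemma multinom n k (s : 'I_k -> nat) :
  (\sum_j s j)%N = n -> (cnt n s * \prod_j (s j)`!)%N = n`!.
Proof.
elim: n s => [|n IH] s hs.
  have s0 : forall j, s j = 0%N.
    move=> j; apply/eqP; rewrite -leqn0 -hs.
    by rewrite (bigD1 j) //= leq_addr.
  rewrite big1 ?muln1; last by move=> j _; rewrite s0.
  rewrite /cnt.
  have -> : [set f : {ffun 'I_0 -> 'I_k} | [forall j, #|[set x | f x == j]| == s j]] = setT.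
    apply/setP => f; rewrite !inE; apply/forallP => j; rewrite s0.
    by rewrite cards_eq0; apply/eqP/setP => x; case: x.
  by rewrite cardsT card_ffun !card_ord.
rewrite /cnt.
set S := [set f : {ffun 'I_n.+1 -> 'I_k} | _].
have -> : #|S| = (\sum_j #|[set f in S | f ord_max == j]|)%N.
  rewrite -sum1_card (partition_big (fun f : {ffun 'I_n.+1 -> 'I_k} => f ord_max) xpredT) //=.
  apply: eq_bigr => j _; rewrite -sum1_card; apply: eq_bigl => f; by rewrite !inE.
rewrite big_distrl /=.
rewrite (eq_bigr (fun j => (s j * n`!)%N)); last first.
  move=> j _; rewrite cnt_slice; case: ifP => hsj; last first.
    by move: hsj; rewrite lt0n => /negbFE/eqP ->.
  have hsum : (\sum_i dec s j i)%N = n.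
    move: hs; rewrite (bigD1 j) //= => hs; rewrite (bigD1 j) //= /dec eqxx.
    rewrite (@eq_bigr _ _ _ _ _ _ _ s); last by move=> i; case: eqP => //; rewrite subn0.
    by move: hs hsj; case: (s j) => // t; rewrite addSn subn1 /= => [[]].
  rewrite -(IH _ hsum) (bigD1 j) //= [in RHS](bigD1 j) //= /dec eqxx.
  have -> : (\prod_(i < k | i != j) (s i - (i == j))`! = \prod_(i < k | i != j) (s i)`!)%N.
    by apply: eq_bigr => i; case: eqP => //; rewrite subn0.
  case: (s j) hsj => // t _; rewrite factS subn1 /=; ring.
by rewrite -big_distrl /= hs factS.
Qed.
End Multi.
Section Graph.
Variables (n k : nat).
Definition two := [set e : {set 'I_n} | #|e| == 2].
Definition mono (f : {ffun 'I_n -> 'I_k}) (e : {set 'I_n}) :=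
  [forall x in e, forall y in e, f x == f y].
Definition cross f := [set e in two | ~~ mono f e].

Lemma graphs_eq m : graphs_nm n m = [set E : {set {set 'I_n}} | E \subset two & #|E| == m].
Proof.
apply/setP => E; rewrite !inE /is_graph; congr (_ && _).
apply/forallP/subsetP => h e; first by move=> he; rewrite inE; exact: (implyP (h e)).
by apply/implyP => he; move: (h e he); rewrite inE.
Qed.

Lemma card_two : #|two| = 'C(n, 2).
Proof. by rewrite /two card_draws card_ord. Qed.

Lemma card_graphs m : #|graphs_nm n m| = 'C('C(n, 2), m).
Proof. by rewrite graphs_eq cards_draws card_two. Qed.

Lemma indep_sub E f : is_graph E -> parts_indep E f = (E \subset cross f).
Proof.
move=> /forallP hE; apply/forallP/subsetP.
  move=> h e he; move: (implyP (hE e) he) => /cards2P [x [y [hxy exy]]].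
  rewrite !inE (implyP (hE e) he) /=; apply/negP => /forallP hm.
  move: (forallP (h x) y); rewrite -exy he /= => /negP; apply.
  by move: (hm x); rewrite exy !inE eqxx /= => /forallP /(_ y); rewrite !inE eqxx orbT.
move=> h x; apply/forallP => y; apply/implyP => he.
move: (h _ he); rewrite !inE => /andP [_ /negP hm].
apply/negP => /eqP hxy; apply: hm; apply/forallP => u; apply/implyP; rewrite !inE => hu.
apply/forallP => v; apply/implyP; rewrite !inE => hv.
by case/orP: hu => /eqP ->; case/orP: hv => /eqP ->; rewrite ?hxy.
Qed.

Lemma card_indep m f :
  #|[set E in graphs_nm n m | parts_indep E f]| = 'C(#|cross f|, m).
Proof.
rewrite -cards_draws; apply: eq_card => E; rewrite !inE.
case hg: (is_graph E) => /=.
  by rewrite (indep_sub _ hg) andbC.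
apply/esym/negbTE/negP => /andP [hs _]; move: hg => /negP; apply.
apply/forallP => e; apply/implyP => he; move: (subsetP hs e he); by rewrite !inE => /andP [].
Qed.
End Graph.
Lemma card_sumE (T : finType) (A : {pred T}) : #|A| = (\sum_x (x \in A))%N.
Proof. by rewrite -sum1_card big_mkcond; apply: eq_bigr => x _; case: (x \in A). Qed.

Lemma card_cross n k (f : {ffun 'I_n -> 'I_k}) :
  (#|cross f| + \sum_j 'C(#|[set x | f x == j]|, 2))%N = 'C(n, 2).
Proof.
set M := [set e : {set 'I_n} | mono f e].
have -> : cross f = two n :\: M by apply/setP => e; rewrite !inE andbC.
rewrite -card_two -(cardsID M (two n)) addnC; congr (_ + _)%N.
rewrite (eq_bigr (fun j => #|[set e : {set 'I_n} | e \subset [set x | f x == j] & #|e| == 2]|)); last first.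
  by move=> j _; rewrite cards_draws.
rewrite card_sumE (eq_bigr (fun j => \sum_e (e \in [set e : {set 'I_n} | e \subset [set x | f x == j] & #|e| == 2]))%N); last first.
  by move=> j _; rewrite card_sumE.
rewrite exchange_big /=; apply: eq_bigr => e _.
rewrite !inE.
case he: (#|e| == 2); last by rewrite big1 // => j _; rewrite !inE he andbF.
move: (he) => /cards2P [x [y [hxy exy]]].
have hm : mono f e = (f x == f y).
  apply/forallP/eqP.
    by move=> h; move: (h x); rewrite exy !inE eqxx /= => /forallP /(_ y); rewrite !inE eqxx orbT /= => /eqP.
  move=> hxy' u; apply/implyP; rewrite exy !inE => hu; apply/forallP => v; apply/implyP; rewrite !inE => hv.
  by case/orP: hu => /eqP ->; case/orP: hv => /eqP ->; rewrite ?hxy'.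
rewrite hm (bigD1 (f x)) //= big1 ?addn0.
  rewrite !inE he andbT exy subUset !sub1set !inE eqxx /=.
  by rewrite eq_sym.
move=> j hj; rewrite !inE he andbT exy subUset !sub1set !inE.
by rewrite eq_sym (negbTE hj).
Qed.

Lemma sumX n k m :
  (\sum_(E in graphs_nm n m) Xnk k E)%N =
  (\sum_(f : {ffun 'I_n -> 'I_k} | equipart f) 'C(#|cross f|, m))%N.
Proof.
rewrite /Xnk (eq_bigr (fun E => \sum_(f : {ffun 'I_n -> 'I_k}) (equipart f && parts_indep E f))%N); last first.
  by move=> E _; rewrite card_sumE; apply: eq_bigr => f _; rewrite inE.
rewrite exchange_big /= [RHS]big_mkcond /=; apply: eq_bigr => f _.
rewrite -card_indep card_sumE big_mkcond /=.
case: (equipart f) => /=; last by rewrite big1 // => E _; case: (E \in _).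
by apply: eq_bigr => E _; rewrite !inE; case: (_ && _).
Qed.
Definition sk (n k : nat) := fun j : 'I_k => (n %/ k + (j < n %% k))%N.
Arguments sk : clear implicits.
Definition Fk (n k : nat) := (\sum_(j < k) 'C(sk n k j, 2))%N.

Lemma sum_split_lt (F : bool -> nat) k r : (r <= k)%N ->
  (\sum_(j < k) F (j < r))%N = (r * F true + (k - r) * F false)%N.
Proof.
move=> hrk; rewrite -(big_mkord xpredT (fun j => F (j < r))) (@big_cat_nat _ _ _ r 0 k _ _ (leq0n r) hrk) /=.
have h1 : (\sum_(0 <= i < r) F (i < r) = \sum_(0 <= i < r) F true)%N.
  by apply: eq_big_nat => i /andP [_ ->].
have h2 : (\sum_(r <= i < k) F (i < r) = \sum_(r <= i < k) F false)%N.
  by apply: eq_big_nat => i /andP [h _]; rewrite ltnNge h.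
by rewrite h1 h2 !sum_nat_const_nat subn0.
Qed.

Lemma prod_split_lt (F : bool -> nat) k r : (r <= k)%N ->
  (\prod_(j < k) F (j < r))%N = (F true ^ r * F false ^ (k - r))%N.
Proof.
move=> hrk; rewrite -(big_mkord xpredT (fun j => F (j < r))) (@big_cat_nat _ _ _ r 0 k _ _ (leq0n r) hrk) /=.
have h1 : (\prod_(0 <= i < r) F (i < r) = \prod_(0 <= i < r) F true)%N.
  by apply: eq_big_nat => i /andP [_ ->].
have h2 : (\prod_(r <= i < k) F (i < r) = \prod_(r <= i < k) F false)%N.
  by apply: eq_big_nat => i /andP [h _]; rewrite ltnNge h.
by rewrite h1 h2 !prod_nat_const_nat subn0.
Qed.

Lemma sum_sk n k : (0 < k)%N -> (\sum_j sk n k j)%N = n.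
Proof.
move=> hk; rewrite /sk (sum_split_lt (fun b => n %/ k + b)%N (ltnW (ltn_pmod n hk))) addn1 addn0.
have := divn_eq n k; have := ltn_pmod n hk; move: (n %/ k) (n %% k) => q r hr hn.
by rewrite [RHS]hn mulnS -addnA -mulnDl subnKC ?(ltnW hr) // mulnC addnC.
Qed.

Lemma prod_sk n k : (0 < k)%N ->
  (\prod_j (sk n k j)`!)%N = (((n %/ k).+1)`! ^ (n %% k) * ((n %/ k)`!) ^ (k - n %% k))%N.
Proof.
move=> hk; rewrite /sk (prod_split_lt (fun b => (n %/ k + b)`!)%N (ltnW (ltn_pmod n hk))).
by rewrite addn1 addn0.
Qed.

Lemma Fk_eq n k : (0 < k)%N ->
  Fk n k = ((n %% k) * 'C((n %/ k).+1, 2) + (k - n %% k) * 'C(n %/ k, 2))%N.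
Proof.
move=> hk; rewrite /Fk /sk (sum_split_lt (fun b => 'C(n %/ k + b, 2))%N (ltnW (ltn_pmod n hk))).
by rewrite addn1 addn0.
Qed.

Lemma card_EP n k : #|[set f : {ffun 'I_n -> 'I_k} | equipart f]| = cnt n (sk n k).
Proof. by apply: eq_card => f; rewrite !inE. Qed.

Lemma mu_eq (R : realType) (p : R) n k :
  mu p n k = ((cnt n (sk n k) * 'C('C(n, 2) - Fk n k, m_of p n))%:R / ('C('C(n, 2), m_of p n))%:R)%R.
Proof.
rewrite /mu card_graphs -natr_sum sumX; congr (_%:R / _)%R.
rewrite -card_EP card_sumE big_mkcond /= big_distrl /=; apply: eq_bigr => f _.
rewrite inE; case hf: (equipart f); last by rewrite mul0n.
rewrite mul1n; congr 'C(_, _).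
rewrite -(card_cross f) /Fk.
have -> : (\sum_(j < k) 'C(sk n k j, 2) = \sum_j 'C(#|[set x | f x == j]|, 2))%N.
  by apply: eq_bigr => j _; move: hf => /forallP /(_ j) /eqP ->.
by rewrite addnK.
Qed.
Lemma expn_mono a b e : (a <= b)%N -> (a ^ e <= b ^ e)%N.
Proof. by case: e => [|e] h //; rewrite leq_exp2r. Qed.

Lemma fact_le s : (s`! <= s.+1 ^ s)%N.
Proof.
elim: s => // s IH; rewrite factS expnS; apply: leq_mul => //.
by apply: (leq_trans IH); apply: expn_mono.
Qed.

Lemma divmod_succA n k : (0 < k)%N -> (n %/ k <= n %% k)%N ->
  n %/ k.+1 = n %/ k /\ n %% k.+1 = (n %% k - n %/ k)%N.
Proof.
move=> hk hqr.
have hn : n = ((n %/ k) * k.+1 + (n %% k - n %/ k))%N.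
  rewrite {1}(divn_eq n k); move: hqr; move: (n %% k) (n %/ k) => a b; lia.
have hlt : (n %% k - n %/ k < k.+1)%N.
  have := ltn_pmod n hk; move: (n %% k) (n %/ k) => a b; lia.
split.
  by rewrite {1}hn divnMDl // (divn_small hlt) addn0.
by rewrite {1}hn modnMDl modn_small.
Qed.

Lemma divmod_succB n k : (0 < k)%N -> (n %% k < n %/ k)%N -> (n %/ k <= k)%N ->
  n %/ k.+1 = (n %/ k).-1 /\ n %% k.+1 = (n %% k + k.+1 - n %/ k)%N.
Proof.
move=> hk hqr hqk.
have hn : n = ((n %/ k).-1 * k.+1 + (n %% k + k.+1 - n %/ k))%N.
  rewrite {1}(divn_eq n k); move: hqr hqk.
  case: (n %/ k) => // q; rewrite succnK; move: (n %% k) => a; lia.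
have hlt : (n %% k + k.+1 - n %/ k < k.+1)%N by move: hqr; move: (n %% k) (n %/ k) => a b; lia.
split.
  by rewrite {1}hn divnMDl // (divn_small hlt) addn0.
by rewrite {1}hn modnMDl modn_small.
Qed.
Definition Pk n k := (((n %/ k).+1)`! ^ (n %% k) * ((n %/ k)`!) ^ (k - n %% k))%N.

Lemma P_mono n k : (0 < k)%N -> (n %/ k <= k)%N -> (Pk n k.+1 <= Pk n k)%N.
Proof.
move=> hk hqk; rewrite /Pk.
have hr := ltn_pmod n hk.
case: (leqP (n %/ k) (n %% k)) => hqr.
  have [-> ->] := divmod_succA hk hqr.
  move: hqr hr; set q := (n %/ k); set r := (n %% k) => hqr hr.
  have [t ht] : exists t, r = (q + t)%N by exists (r - q)%N; lia.
  have [w hw] : exists w, k = (q + t + w).+1 by exists (k - (q + t)).-1; lia.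
  have -> : (r - q = t)%N by lia.
  have -> : (k.+1 - t = q + w + 2)%N by lia.
  have -> : (k - r = w + 1)%N by lia.
  rewrite ht factS.
  set C := ((q.+1) ^ t * q`! ^ t * q`! ^ q * q`! ^ w * q`!)%N.
  have -> : ((q.+1 * q`!) ^ t * q`! ^ (q + w + 2) = C * q`!)%N.
    by rewrite /C !expnD !expnMn; ring.
  have -> : ((q.+1 * q`!) ^ (q + t) * q`! ^ (w + 1) = C * q.+1 ^ q)%N.
    by rewrite /C !expnD !expnMn; ring.
  by rewrite leq_mul2l fact_le orbT.
have hq0 : (0 < n %/ k)%N by lia.
have [-> ->] := divmod_succB hk hqr hqk.
move: hqr hr hqk hq0; set q := (n %/ k); set r := (n %% k) => hqr hr hqk hq0.
have [s hs] : exists s, q = s.+1 by exists q.-1; lia.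
have [t ht] : exists t, s = (r + t)%N by exists (s - r)%N; lia.
have [w hw] : exists w, k = (s + 1 + w)%N by exists (k - (s + 1))%N; lia.
have -> : (r + k.+1 - q = r + 1 + w)%N by lia.
have -> : (k.+1 - (r + 1 + w) = t + 1)%N by lia.
have -> : (k - r = t + 1 + w)%N by lia.
rewrite hs /= !factS.
set C := ((s.+1) ^ (r + 1 + w) * s`! ^ (r + 1 + w + t))%N.
have -> : ((s.+1 * s`!) ^ (r + 1 + w) * s`! ^ (t + 1) = C * s`!)%N.
  by rewrite /C !expnD !expnMn; ring.
have -> : ((s.+2 * (s.+1 * s`!)) ^ r * (s.+1 * s`!) ^ (t + 1 + w) = C * (s.+2 ^ r * s.+1 ^ t))%N.
  by rewrite /C !expnD !expnMn; ring.
rewrite leq_mul2l; apply/orP; right.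
apply: (leq_trans (fact_le s)); rewrite ht expnD leq_mul2r; apply/orP; right.
exact: expn_mono.
Qed.
Local Open Scope ring_scope.

Lemma bin2S q : ('C(q.+1, 2) = 'C(q, 2) + q)%N.
Proof. by rewrite binS bin1. Qed.

Lemma bin2R (R : realType) q : ('C(q, 2))%:R * 2 = q%:R * (q%:R - 1) :> R.
Proof.
elim: q => [|q IH]; first by rewrite bin0n mul0r mul0r.
rewrite bin2S natrD mulrDl IH -natr1; ring.
Qed.

Lemma FkR (R : realType) n k : (0 < k)%N ->
  (Fk n k)%:R * 2 = (n %/ k)%:R * (n%:R + (n %% k)%:R - k%:R) :> R.
Proof.
move=> hk; rewrite Fk_eq // (@natrD R) !(@natrM R) mulrDl -!mulrA !bin2R (natrB _ (ltnW (ltn_pmod n hk))).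
have hn := divn_eq n k; move: (n %/ k)%N (n %% k)%N hn => q r ->.
rewrite (@natrD R) (@natrM R) -!natr1; ring.
Qed.

Lemma D_ge (R : realType) n k : (0 < k)%N -> (n %/ k <= k)%N ->
  (Fk n k.+1 <= Fk n k)%N /\
  (n%:R)^+2 / (2 * k%:R * k.+1%:R) - n%:R / (2 * k%:R) <= (Fk n k - Fk n k.+1)%:R :> R.
Proof.
move=> hk hqk.
have hr := ltn_pmod n hk.
have h1 := FkR R n hk.
have h2 := FkR R n (ltn0Sn k).
have hn : n%:R = k%:R * (n %/ k)%:R + (n %% k)%:R :> R.
  by rewrite {1}(divn_eq n k) natrD natrM mulrC.
have hk0 : 0 < k%:R :> R by rewrite ltr0n.
have key : (Fk n k.+1)%:R <= (Fk n k)%:R :> R /\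
  n%:R * (n%:R - k%:R - 1) <= 2 * k%:R * k.+1%:R * ((Fk n k)%:R - (Fk n k.+1)%:R) :> R.
  case: (leqP (n %/ k)%N (n %% k)%N) => hqr.
    have [hq' hr'] := divmod_succA hk hqr.
    move: h2; rewrite hq' hr' natrB // -natr1 => h2.
    move: h1 h2 hn hqr hr; set q := (n %/ k)%N; set r := (n %% k)%N => h1 h2 hn hqr hr.
    have hqr' : q%:R <= r%:R :> R by rewrite ler_nat.
    have hrk : r%:R + 1 <= k%:R :> R by rewrite natr1 ler_nat.
    have hq0 : 0 <= q%:R :> R by [].
    rewrite -natr1.
    have hD : ((Fk n k)%:R - (Fk n k.+1)%:R) * 2 = q%:R * (q%:R + 1) :> R.
      rewrite mulrBl h1 h2 hn; ring.
    have kr : 0 <= k%:R - r%:R :> R by lra.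
    have e1 : 0 <= k%:R * q%:R * (k%:R - r%:R) :> R by apply: mulr_ge0 => //; apply: mulr_ge0.
    have e2 : 0 <= r%:R * (k%:R - r%:R) :> R by apply: mulr_ge0.
    have e3 : 0 <= k%:R * q%:R * q%:R :> R by apply: mulr_ge0 => //; apply: mulr_ge0.
    have e4 : 0 <= k%:R * q%:R :> R by apply: mulr_ge0.
    split; first nra.
    rewrite hn; nra.
  have hq0 : (0 < n %/ k)%N by lia.
  have [hq' hr'] := divmod_succB hk hqr hqk.
  have e5 : ((n %% k + k.+1 - n %/ k)%N)%:R = (n %% k)%:R + k%:R + 1 - (n %/ k)%:R :> R.
    rewrite natrB; last by lia.
    by rewrite (@natrD R) -natr1 addrA.
  have e6 : ((n %/ k).-1)%:R = (n %/ k)%:R - 1 :> R.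
    by rewrite -subn1 natrB.
  move: h2; rewrite hq' hr' e5 e6 -natr1 => h2.
  move: h1 h2 hn hqr hr hqk; set q := (n %/ k)%N; set r := (n %% k)%N => h1 h2 hn hqr hr hqk.
  have hqr' : r%:R + 1 <= q%:R :> R by rewrite natr1 ler_nat.
  have hrk : r%:R + 1 <= k%:R :> R by rewrite natr1 ler_nat.
  have hqk' : q%:R <= k%:R :> R by rewrite ler_nat.
  have hr0 : 0 <= r%:R :> R by [].
  rewrite -natr1.
  have hD : ((Fk n k)%:R - (Fk n k.+1)%:R) * 2 = 2 * r%:R + q%:R * (q%:R - 1) :> R.
    rewrite mulrBl h1 h2 hn; ring.
  have kr : 0 <= k%:R - r%:R :> R by lra.
  have kq : 0 <= k%:R - q%:R :> R by lra.
  have e1 : 0 <= r%:R * k%:R * (k%:R - q%:R) :> R by apply: mulr_ge0 => //; apply: mulr_ge0.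
  have e2 : 0 <= r%:R * (k%:R - r%:R) :> R by apply: mulr_ge0.
  have e3 : 0 <= k%:R * q%:R * q%:R :> R by apply: mulr_ge0 => //; apply: mulr_ge0.
  have e4 : 0 <= r%:R * k%:R :> R by apply: mulr_ge0.
  split; first nra.
  rewrite hn; nra.
case: key => kA kB.
have hle : (Fk n k.+1 <= Fk n k)%N by rewrite -(ler_nat R).
split => //.
rewrite natrB //.
have hk1 : 0 < 2 * k%:R * k.+1%:R :> R by rewrite -natr1; nra.
have -> : (n%:R)^+2 / (2 * k%:R * k.+1%:R) - n%:R / (2 * k%:R) =
  n%:R * (n%:R - k%:R - 1) / (2 * k%:R * k.+1%:R) :> R.
  rewrite -natr1; field; rewrite -natr1 in hk1; apply/andP; split; rewrite ?pnatr_eq0 -?lt0n //; nra.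
by rewrite ler_pdivrMr // [X in _ <= X]mulrC.
Qed.
Local Open Scope ring_scope.
Lemma binom_step (R : realType) N m Y : (m < Y)%N -> (Y <= N)%N ->
  N%:R * ('C(Y.-1, m))%:R <= (N - m)%:R * ('C(Y, m))%:R :> R.
Proof.
move=> hmY hYN.
have h := mul_bin_down Y m.
have hR : Y%:R * ('C(Y.-1, m))%:R = (Y%:R - m%:R) * ('C(Y, m))%:R :> R.
  by rewrite -natrB ?(ltnW hmY) // -!natrM h.
rewrite natrB ?(ltnW (leq_trans hmY hYN)) //.
have hYm : 0 < Y%:R - m%:R :> R by rewrite subr_gt0 ltr_nat.
have hYN' : Y%:R <= N%:R :> R by rewrite ler_nat.
have hm0 : 0 <= m%:R :> R by [].
have hb1 : 0 <= ('C(Y.-1, m))%:R :> R by [].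
have hb2 : 0 <= ('C(Y, m))%:R :> R by [].
rewrite -(ler_pM2r hYm).
have -> : (N%:R - m%:R) * ('C(Y, m))%:R * (Y%:R - m%:R) = (N%:R - m%:R) * (Y%:R * ('C(Y.-1, m))%:R) :> R.
  by rewrite hR; ring.
have hh : 0 <= ('C(Y.-1, m))%:R * m%:R * (N%:R - Y%:R) :> R.
  by apply: mulr_ge0; [apply: mulr_ge0 | lra].
nra.
Qed.

Lemma binom_ratio (R : realType) N m X D : (m <= X)%N -> (X + D <= N)%N -> (m < N)%N ->
  (N%:R / (N - m)%:R)^+D * ('C(X, m))%:R <= ('C(X + D, m))%:R :> R.
Proof.
move=> hmX hXN hmN.
have hNm : 0 < (N - m)%:R :> R by rewrite ltr0n subn_gt0.
elim: D hXN => [|D IH] hXN; first by rewrite expr0 mul1r addn0.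
rewrite exprS -mulrA.
apply: (le_trans (y := N%:R / (N - m)%:R * ('C(X + D, m))%:R)).
  apply: ler_wpM2l; first by apply: divr_ge0.
  by apply: IH; lia.
rewrite mulrAC ler_pdivrMr //.
have := binom_step R (m := m) (Y := (X + D.+1)%N) (N := N) _ hXN.
rewrite addnS /= mulrC => h; rewrite [X in _ <= X]mulrC; apply: h; lia.
Qed.

Lemma bernoulli_le (R : realType) (t : R) D : 0 <= t -> t <= 1 ->
  1 - D%:R * t <= (1 - t)^+D.
Proof.
move=> h0 h1; elim: D => [|D IH]; first by rewrite mul0r subr0 expr0.
rewrite exprS.
have h2 : 0 <= 1 - t by lra.
have hD : 0 <= D%:R :> R by [].
apply: (le_trans (y := (1 - t) * (1 - D%:R * t))); last by apply: ler_wpM2l.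
rewrite -natr1; nra.
Qed.
Unset Implicit Arguments.
Local Open Scope ring_scope.
Lemma aux_XD F1 F2 Nb : (F2 <= F1)%N -> (F1 <= Nb)%N -> (Nb - F1 + (F1 - F2) = Nb - F2)%N.
Proof. lia. Qed.
Lemma aux_le m F1 Nb : (m + F1 <= Nb)%N -> (m <= Nb - F1)%N.
Proof. lia. Qed.
Lemma aux_le2 F1 F2 Nb : (F2 <= F1)%N -> (F1 <= Nb)%N -> (Nb - F1 + (F1 - F2) <= Nb)%N.
Proof. lia. Qed.

Theorem lemma2 (R : realType) (p : R) (hp0 : 0 < p) (hp1 : p < 1 - expR (-2))
  (k : nat -> nat) (hk : forall n, (0 < k n)%N)
  (hO : exists C : R, exists N : nat, forall n : nat, (N <= n)%N ->
          `| n%:R / (k n)%:R - gamma_n p n | <= C) :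
  forall eps : R, 0 < eps -> exists N : nat, forall n : nat, (N <= n)%N ->
    (1 - eps) * powR (bb p)
        ((n%:R)^+2 / (2 * (k n)%:R * (k n).+1%:R) - n%:R / (2 * (k n)%:R))
      <= mu p n (k n).+1 / mu p n (k n).
Proof.
move=> eps heps.
have hmu0 : forall n k', 0 <= mu p n k'.
  by move=> n k'; rewrite mu_eq; apply: divr_ge0.
case: (lerP (1 - eps) 0) => heps1.
  exists 0%N => n _.
  apply: (le_trans (y := 0)); first by apply: mulr_le0_ge0 => //; apply: powR_ge0.
  by apply: divr_ge0.
have hp1' : p < 1 by have := expR_gt0 (-2 : R); lra.
have h1p : 0 < 1 - p by lra.
set b := bb p.
have hb1 : 1 < b by rewrite /b /bb invf_gt1 //; lra.
have hlnb : 0 < ln b by apply: ln_gt0.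
have hbp : b * (1 - p) = 1 by rewrite /b /bb mulVf // lt0r_neq0.
set del := eps * (1 - p).
have hdel : 0 < del by apply: mulr_gt0.
case: hO => C [N0 hN0].
set A := 8 / ln b.
have hA : 0 <= A by apply: divr_ge0 => //; apply: ltW.
set B := A + `|C| + 1.
have hB : 1 <= B by rewrite /B; have := normr_ge0 C; lra.
set U0 := 2 + B + B / del.
have hBd : 0 <= B / del by apply: divr_ge0; lra.
exists (maxn N0 (maxn (Num.truncn (U0 ^+ 4)).+1 (Num.truncn b).+1)) => n.
rewrite !geq_max => /and3P [hnN0 hnU hnb].
have hnU' : U0 ^+ 4 < n%:R.
  apply: (lt_le_trans (truncnS_gt _)); by rewrite ler_nat.
have hnb' : b < n%:R.
  apply: (lt_le_trans (truncnS_gt _)); by rewrite ler_nat.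
have hU2 : 2 <= U0 by rewrite /U0; lra.
pose u := Num.sqrt (Num.sqrt (n%:R : R)).
have hu0' : 0 <= u by apply: sqrtr_ge0.
have hu4 : u ^+ 4 = n%:R.
  have -> : u ^+ 4 = (u ^+ 2) ^+ 2 by rewrite -exprM.
  by rewrite sqr_sqrtr ?sqrtr_ge0 // sqr_sqrtr.
have hu : U0 <= u.
  rewrite -(@ler_pXn2r R 4 isT U0 u) ?nnegrE ?hu4; [exact: ltW | lra | done].
have hu0 : 0 < u by lra.
have hln : ln n%:R <= 4 * u.
  rewrite -hu4 lnXn // -mulr_natl.
  have := @le_ln1Dx R (u - 1) ltac:(lra); rewrite addrC subrK => h; lra.
have hlogb1 : 1 < logb p n%:R.
  rewrite /logb -/b ltr_pdivlMr // mul1r ltr_ln // ?posrE; lra.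
have hlog0 : 0 <= logb p (logb p n%:R).
  rewrite /logb -/b; apply: divr_ge0; [apply: ln_ge0 | apply: ltW] => //.
  by apply: ltW.
have hlog2 : 0 <= logb p 2.
  rewrite /logb -/b; apply: divr_ge0; [apply: ln_ge0 | apply: ltW] => //. lra.
have hgam : gamma_n p n <= A * u.
  rewrite /gamma_n.
  have : logb p n%:R <= 4 * u / ln b by rewrite /logb -/b ler_pM2r // invr_gt0.
  have -> : A * u = 2 * (4 * u / ln b) by rewrite /A; field; rewrite lt0r_neq0.
  lra.
set k0 := k n.
have hk0 : (0 < k0)%N := hk n.
pose x : R := n%:R / k0%:R.
have hxC : `|x - gamma_n p n| <= C := hN0 n hnN0.
have hCu : `|C| <= `|C| * u by apply: ler_peMr => //; lra.
have hx : x <= B * u.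
  have := ler_norm (x - gamma_n p n); have := ler_norm C.
  rewrite /B !mulrDl mul1r; lra.
have hk0R : 0 < k0%:R :> R by rewrite ltr0n.
have hx0 : 0 <= x by apply: divr_ge0.
have hxk : x * k0%:R = n%:R by rewrite /x divfK // lt0r_neq0.
have hBU : B <= u by rewrite /U0 in hU2 hu; lra.
have hxu2 : x <= u * u.
  apply: (le_trans hx); apply: ler_wpM2r; lra.
have hu4' : u ^+ 4 = (u * u) * (u * u) by ring.
have hxn : x ^+ 2 <= n%:R.
  rewrite -hu4 hu4' expr2; nra.
have hdu : B <= del * u.
  have : B / del <= u by rewrite /U0 in hu; lra.
  by rewrite ler_pdivrMr // mulrC.
have hu3 : u * u * u <= n%:R - 1.
  rewrite -hu4 hu4'; nra.
have hBu : B * u <= del * (n%:R - 1).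
  apply: (le_trans (y := del * (u * u * u))); last by apply: ler_wpM2l; lra.
  have h1 : B * u <= B * (u * u) by apply: ler_wpM2l; nra.
  apply: (le_trans h1); rewrite !mulrA; apply: ler_wpM2r; nra.
have hxd : x <= del * (n%:R - 1) by lra.
have h1d : 1 <= del * (n%:R - 1) by nra.
have hn2 : 2 <= n%:R :> R by rewrite -hu4 hu4'; nra.
clear hgam hlog0 hlog2 hlogb1 hln hxC hCu hx hBU hxu2 hdu hu3 hBu hnU' hnb' hU2 hu hu0 hu0' hu4 hu4' hBd hB hA hN0 hmu0 hnN0 hnU hnb.
pose q := (n %/ k0)%N.
have hqx : q%:R <= x.
  rewrite /x ler_pdivlMr // -natrM ler_nat; exact: leq_trunc_div.
have hxk0 : x <= k0%:R by nra.
have hqk : (q <= k0)%N by rewrite -(ler_nat R); lra.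
have [hF21 hDE] := @D_ge R n k0 hk0 hqk.
pose Nb := 'C(n, 2).
have hNb : Nb%:R * 2 = n%:R * (n%:R - 1) :> R := @bin2R R n.
pose F1 := Fk n k0.
pose F2 := Fk n k0.+1.
have hF1 : F1%:R * 2 <= q%:R * n%:R :> R.
  have := @FkR R n k0 hk0; rewrite -/F1 -/q => ->.
  have : (n %% k0)%:R <= k0%:R :> R by rewrite ler_nat ltnW // ltn_pmod.
  have : 0 <= q%:R :> R by [].
  nra.
pose m := m_of p n.
have hNb0 : 0 <= Nb%:R :> R by [].
have hm1 : m%:R <= p * Nb%:R.
  rewrite /m /m_of truncn_le; apply: mulr_ge0 => //; lra.
have hm2 : p * Nb%:R < m%:R + 1.
  rewrite /m /m_of natr1; exact: truncnS_gt.
pose a := (1 - p) * Nb%:R.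
have ea : a = Nb%:R - p * Nb%:R by rewrite /a; ring.
have hFa : F1%:R <= eps * a.
  have h1 : q%:R * n%:R <= del * (n%:R - 1) * n%:R by apply: ler_wpM2r => //; lra.
  have e : eps * a * 2 = del * (n%:R - 1) * n%:R.
    have -> : eps * a * 2 = eps * (1 - p) * (Nb%:R * 2) by rewrite /a; ring.
    rewrite hNb /del; ring.
  lra.
have hNb1 : n%:R - 1 <= Nb%:R :> R.
  have h0 : 0 <= (n%:R - 2) * (n%:R - 1) :> R by apply: mulr_ge0; lra.
  have e : n%:R * (n%:R - 1) - 2 * (n%:R - 1) = (n%:R - 2) * (n%:R - 1) :> R by ring.
  lra.
have ha1 : 1 <= a.
  have h1 : (1 - p) * (n%:R - 1) <= a by rewrite /a; apply: ler_wpM2l; lra.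
  have h2 : del * (n%:R - 1) <= (1 - p) * (n%:R - 1).
    rewrite /del; apply: ler_wpM2r; first lra.
    apply: ler_piMl; lra.
  lra.
have hmX : (m + F1 <= Nb)%N.
  rewrite -(ler_nat R) natrD; have : eps * a <= a by apply: ler_piMl; lra.
  lra.
have hmN : (m < Nb)%N by rewrite -(ltr_nat R); lra.
have hF1N : (F1 <= Nb)%N := leq_trans (leq_addl _ _) hmX.
have hXD := aux_XD _ _ _ hF21 hF1N.
have hbr := @binom_ratio R Nb m (Nb - F1)%N (F1 - F2)%N (aux_le _ _ _ hmX) (aux_le2 _ _ _ hF21 hF1N) hmN.
rewrite hXD in hbr.
have hz : (Nb - m)%:R = Nb%:R - m%:R :> R by rewrite natrB // ltnW.
have hz0 : 0 < Nb%:R - m%:R :> R by rewrite -hz ltr0n subn_gt0.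
have hzle : Nb%:R - m%:R <= a + 1 by rewrite ea; lra.
pose c := Nb%:R / (Nb - m)%:R :> R.
have ha0 : 0 < a by lra.
have hia : a * a^-1 = 1 by rewrite mulfV // lt0r_neq0.
have hia0 : 0 <= a^-1 by rewrite invr_ge0 ltW.
have hia1 : a^-1 <= 1 by rewrite invf_le1.
have hc : 1 - a^-1 <= c * (1 - p).
  have -> : c * (1 - p) = a / (Nb%:R - m%:R) by rewrite /c /a hz; field; rewrite lt0r_neq0.
  rewrite ler_pdivlMr //.
  have h : 0 <= (1 - a^-1) * (a + 1 - (Nb%:R - m%:R)) by apply: mulr_ge0; lra.
  have e : (1 - a^-1) * (a + 1) = a - a^-1 by rewrite mulrBl mul1r mulrDr mulr1 [a^-1 * a]mulrC hia; ring.
  nra.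
set D := (F1 - F2)%N.
have hDa : D%:R * a^-1 <= eps.
  have : D%:R <= eps * a.
    apply: le_trans hFa; rewrite ler_nat; exact: leq_subr.
  by move=> h; rewrite ler_pdivrMr.
have hbern := @bernoulli_le R (a^-1) D hia0 hia1.
have hpow : (1 - a^-1) ^+ D <= (c * (1 - p)) ^+ D.
  by apply: lerXn2r => //; rewrite nnegrE; lra.
have hcD : b ^+ D * (c * (1 - p)) ^+ D = c ^+ D.
  by rewrite -exprMn mulrCA hbp mulr1.
have hE : b `^ (n%:R ^+ 2 / (2 * k0%:R * k0.+1%:R) - n%:R / (2 * k0%:R)) <= b ^+ D.
  rewrite -powR_mulrn; last by lra.
  by apply: ler_powR; [exact: ltW | exact: hDE].
have hbD0 : 0 <= b ^+ D by apply: exprn_ge0; lra.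
have hL : (1 - eps) * b `^ (n%:R ^+ 2 / (2 * k0%:R * k0.+1%:R) - n%:R / (2 * k0%:R)) <= c ^+ D.
  apply: (le_trans (y := (1 - eps) * b ^+ D)); first by apply: ler_wpM2l => //; lra.
  apply: (le_trans (y := (1 - a^-1) ^+ D * b ^+ D)); last by rewrite -hcD mulrC; apply: ler_wpM2l.
  apply: ler_wpM2r => //; lra.
set L := (1 - eps) * _.
have hL0 : 0 <= L by apply: mulr_ge0; [lra | apply: powR_ge0].
have hmk : (cnt n (sk n k0) * Pk n k0 = n`!)%N.
  rewrite /Pk -prod_sk //; apply: multinom; exact: sum_sk.
have hmk1 : (cnt n (sk n k0.+1) * Pk n k0.+1 = n`!)%N.
  rewrite /Pk -prod_sk //; apply: multinom; exact: sum_sk.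
have hP : (Pk n k0.+1 <= Pk n k0)%N := P_mono hk0 hqk.
have hP1 : (0 < Pk n k0.+1)%N.
  by have := fact_gt0 n; rewrite -hmk1 muln_gt0 => /andP [].
have hcnt0 : (0 < cnt n (sk n k0))%N.
  by have := fact_gt0 n; rewrite -hmk muln_gt0 => /andP [].
have hcnt : (cnt n (sk n k0) <= cnt n (sk n k0.+1))%N.
  rewrite -(leq_pmul2r hP1); apply: (leq_trans (leq_mul (leqnn _) hP)).
  by rewrite hmk hmk1.
have hCn : 0 < ('C(Nb, m))%:R :> R by rewrite ltr0n bin_gt0 ltnW.
have hC0 : 0 < ('C(Nb - F1, m))%:R :> R by rewrite ltr0n bin_gt0 (aux_le _ _ _ hmX).
rewrite !mu_eq.
change (L <= (cnt n (sk n k0.+1) * 'C(Nb - F2, m))%:R / ('C(Nb, m))%:R /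
  ((cnt n (sk n k0) * 'C(Nb - F1, m))%:R / ('C(Nb, m))%:R)).
rewrite ler_pdivlMr; last first.
  by apply: divr_gt0 => //; rewrite natrM; apply: mulr_gt0 => //; rewrite ltr0n.
rewrite mulrA ler_pM2r ?invr_gt0 //.
rewrite !natrM mulrCA.
apply: ler_pM => //.
- by apply: mulr_ge0 => //; apply: ltW.
- by rewrite ler_nat.
apply: (le_trans _ hbr); apply: ler_wpM2r; [exact: ltW | exact: hL].
Qed.
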